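(* If $\widetilde\alpha^{[+2]}$ is a smooth spin-$+2$-weighted function satisfying $\mathfrak T^{[+2]}\widetilde\alpha^{[+2]}=0$, then $$\big(\mathcal L^{[+2]}(\mathcal L^{[+2]}-2)-12M\partial_t\big)\widetilde\alpha^{[+2]}=w^2(w^{-1}L)(w^{-1}L)(w^{-1}\underline L)(w^{-1}\underline L)\widetilde\alpha^{[+2]}.$$ If $\widetilde\alpha^{[-2]}$ is a smooth spin-$-2$-weighted function satisfying $\mathfrak T^{[-2]}\widetilde\alpha^{[-2]}=0$, then $$\big(\mathcal L^{[-2]}(\mathcal L^{[-2]}-2)+12M\partial_t\big)\widetilde\alpha^{[-2]}=w^2(w^{-1}\underline L)(w^{-1}\underline L)(w^{-1}L)(w^{-1}L)\widetilde\alpha^{[-2]}.$$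
   Context: Fix $M>0$, $k>0$; $\Delta(r)=r^2+k^2r^4-2Mr$, $w:=\Delta/r^4$. On the Schwarzschild–AdS exterior with metric $-(1+k^2r^2-\frac{2M}{r})dt^2+(1+k^2r^2-\frac{2M}{r})^{-1}dr^2+r^2(d\vartheta^2+\sin^2\vartheta d\varphi^2)$, let $r^\star$ be given by $dr^\star/dr=r^2/\Delta$, $r^\star(\infty)=\pi/2$; $L=\partial_t+\partial_{r^\star}$, $\underline L=\partial_t-\partial_{r^\star}$, $w'=dw/dr^\star$; $(w^{-1}L)$ denotes the operator $\phi\mapsto w^{-1}L\phi$ and products denote compositions. $-\mathcal{L}^{[\pm2]}:=\frac{1}{\sin\vartheta}\partial_\vartheta(\sin\vartheta\partial_\vartheta)+\frac{1}{\sin^2\vartheta}\partial_\varphi^2\pm4i\frac{\cos\vartheta}{\sin^2\vartheta}\partial_\varphi-4\cot^2\vartheta-4$ on spin $\pm2$ functions. Teukolsky operators: $\mathfrak T^{[+2]}\phi=-L\underline L\phi+2\frac{w'}{w}\underline L\phi-w(\mathcal L^{[+2]}-2+\frac{6M}{r})\phi$, $\mathfrak T^{[-2]}\phi=-L\underline L\phi-2\frac{w'}{w}L\phi-w(\mathcal L^{[-2]}-2+\frac{6M}{r})\phi$. *)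

(* Defs.v *)
From Stdlib Require Import Reals List.
From Coquelicot Require Import Coquelicot.
Open Scope R_scope.

(** Functions on the Boyer–Lindquist-type chart (t, r, theta, phi) of the
    Schwarzschild–AdS exterior, complex valued (spin-weighted functions are
    represented by their component in this chart). *)
Definition SWFun := R -> R -> R -> R -> C.

Definition Delta (M k r : R) : R := r ^ 2 + k ^ 2 * r ^ 4 - 2 * M * r.
Definition wfun (M k r : R) : R := Delta M k r / r ^ 4.
(** dr*/dr = r^2/Delta, hence  d/dr* = (Delta/r^2) d/dr. *)
Definition drsdr_inv (M k r : R) : R := Delta M k r / r ^ 2.
Definition wprime (M k r : R) : R := drsdr_inv M k r * Derive (wfun M k) r.

(** The exterior region {r > r_+} (for r > 0, Delta > 0 iff r > r_+),
    with theta in the open coordinate range (0, pi). *)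
Definition exterior (M k : R) (t r th ph : R) : Prop :=
  0 < r /\ 0 < Delta M k r /\ 0 < th < PI.

(** Coordinate partial derivatives: index 0 = t, 1 = r, 2 = theta, 3 = phi. *)
Definition slice (i : nat) (F : SWFun) (t r th ph : R) : R -> C :=
  fun s => match i with
           | O => F s r th ph
           | 1%nat => F t s th ph
           | 2%nat => F t r s ph
           | _ => F t r th s
           end.
Definition coord (i : nat) (t r th ph : R) : R :=
  match i with O => t | 1%nat => r | 2%nat => th | _ => ph end.

Definition pd (i : nat) (F : SWFun) : SWFun := fun t r th ph =>
  (Derive (fun s => Re (slice i F t r th ph s)) (coord i t r th ph),
   Derive (fun s => Im (slice i F t r th ph s)) (coord i t r th ph)).

Definition ex_pd (i : nat) (F : SWFun) (t r th ph : R) : Prop :=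
  ex_derive (fun s => Re (slice i F t r th ph s)) (coord i t r th ph) /\
  ex_derive (fun s => Im (slice i F t r th ph s)) (coord i t r th ph).

Definition iter_pd (l : list nat) (F : SWFun) : SWFun := fold_right pd F l.

Definition uncurry4 (G : R -> R -> R -> R -> R) (p : R * R * R * R) : R :=
  G (fst (fst (fst p))) (snd (fst (fst p))) (snd (fst p)) (snd p).

Definition smooth_on (D : R -> R -> R -> R -> Prop) (F : SWFun) : Prop :=
  forall (l : list nat) t r th ph, D t r th ph ->
    (forall i : nat, (i < 4)%nat -> ex_pd i (iter_pd l F) t r th ph) /\
    continuous (uncurry4 (fun a b c d => Re (iter_pd l F a b c d))) (t, r, th, ph) /\
    continuous (uncurry4 (fun a b c d => Im (iter_pd l F a b c d))) (t, r, th, ph).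

Definition phi_periodic (F : SWFun) : Prop :=
  forall t r th ph, F t r th (ph + 2 * PI) = F t r th ph.

Open Scope C_scope.

(** Null vector fields L = d_t + d_{r*},  Lbar = d_t - d_{r*}. *)
Definition Lop (M k : R) (F : SWFun) : SWFun := fun t r th ph =>
  pd 0 F t r th ph + RtoC (drsdr_inv M k r) * pd 1 F t r th ph.
Definition Lbop (M k : R) (F : SWFun) : SWFun := fun t r th ph =>
  pd 0 F t r th ph - RtoC (drsdr_inv M k r) * pd 1 F t r th ph.

Definition wLop (M k : R) (F : SWFun) : SWFun := fun t r th ph =>
  RtoC (/ wfun M k r) * Lop M k F t r th ph.
Definition wLbop (M k : R) (F : SWFun) : SWFun := fun t r th ph =>
  RtoC (/ wfun M k r) * Lbop M k F t r th ph.

(** Spin-weighted angular operator  \mathcal L^{[s]}  for s = +2 (sgn = 1)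
    and s = -2 (sgn = -1):
    -\mathcal L^{[+-2]} = (1/sin) d_th (sin d_th) + (1/sin^2) d_ph^2
        +- 4 i cos/sin^2 d_ph - 4 cot^2 - 4. *)
Definition Lang (sgn : R) (F : SWFun) : SWFun := fun t r th ph =>
  - ( RtoC (/ sin th) * pd 2 (fun t' r' th' ph' => RtoC (sin th') * pd 2 F t' r' th' ph') t r th ph
      + RtoC (/ (sin th ^ 2)) * pd 3 (pd 3 F) t r th ph
      + RtoC (sgn * 4) * Ci * RtoC (cos th / sin th ^ 2) * pd 3 F t r th ph
      - RtoC (4 * (cos th / sin th) ^ 2) * F t r th ph
      - RtoC 4 * F t r th ph ).

Definition Teuk_plus (M k : R) (F : SWFun) : SWFun := fun t r th ph =>
  - Lop M k (Lbop M k F) t r th ph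
  + RtoC (2 * (wprime M k r / wfun M k r)) * Lbop M k F t r th ph
  - RtoC (wfun M k r) *
      (Lang 1 F t r th ph - RtoC 2 * F t r th ph + RtoC (6 * M / r) * F t r th ph).
Definition Teuk_minus (M k : R) (F : SWFun) : SWFun := fun t r th ph =>
  - Lop M k (Lbop M k F) t r th ph
  - RtoC (2 * (wprime M k r / wfun M k r)) * Lop M k F t r th ph
  - RtoC (wfun M k r) *
      (Lang (-1) F t r th ph - RtoC 2 * F t r th ph + RtoC (6 * M / r) * F t r th ph).

Close Scope C_scope.

(* Main.v *)
From Stdlib Require Import Reals List Lra Lia Permutation.
From Coquelicot Require Import Coquelicot.
Require Import Defs.
Open Scope R_scope.

Lemma is_derive_c0 (c x : R) : is_derive (fun _ : R => c) x 0.
Proof. exact (is_derive_const c x). Qed.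
Lemma is_derive_val (f : R -> R) x a b : a = b -> is_derive f x a -> is_derive f x b.
Proof. intros ->; auto. Qed.
Lemma isdR_mult (f g : R -> R) x a b : is_derive f x a -> is_derive g x b -> is_derive (fun s => f s * g s) x (a * g x + f x * b).
Proof. intros H1 H2. exact (is_derive_mult f g x a b H1 H2 Rmult_comm). Qed.
Lemma isdR_minus (f g : R -> R) x a b : is_derive f x a -> is_derive g x b -> is_derive (fun s => f s - g s) x (a - b).
Proof. intros H1 H2. exact (is_derive_minus f g x a b H1 H2). Qed.
Lemma isdR_plus (f g : R -> R) x a b : is_derive f x a -> is_derive g x b -> is_derive (fun s => f s + g s) x (a + b).
Proof. intros H1 H2. exact (is_derive_plus f g x a b H1 H2). Qed.
Lemma isdR_opp (f : R -> R) x a : is_derive f x a -> is_derive (fun s => - f s) x (- a).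
Proof. intros H1. exact (is_derive_opp f x a H1). Qed.

Definition isd (f : R -> C) (x : R) (df : C) : Prop :=
  is_derive (fun s => Re (f s)) x (Re df) /\ is_derive (fun s => Im (f s)) x (Im df).

Lemma isd_ext f g x df : (forall s, f s = g s) -> isd f x df -> isd g x df.
Proof. intros H [H1 H2]; split; eapply is_derive_ext; try eassumption; intros s; simpl; now rewrite H. Qed.

Lemma isd_val f x a b : a = b -> isd f x a -> isd f x b.
Proof. intros ->; auto. Qed.

Lemma isd_plus f g x a b : isd f x a -> isd g x b -> isd (fun s => f s + g s)%C x (a + b)%C.
Proof. intros [H1 H2] [H3 H4]; split.
  - pose proof (isdR_plus _ _ _ _ _ H1 H3) as H.
    eapply is_derive_ext; [|eapply is_derive_val; [|exact H]].
    + intros s; cbv beta; unfold Cplus, Re, Im; reflexivity.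
    + destruct a, b. reflexivity.
  - pose proof (isdR_plus _ _ _ _ _ H2 H4) as H.
    eapply is_derive_ext; [|eapply is_derive_val; [|exact H]].
    + intros s; cbv beta; unfold Cplus, Re, Im; reflexivity.
    + destruct a, b. reflexivity.
Qed.

Lemma isd_opp f x a : isd f x a -> isd (fun s => - f s)%C x (- a)%C.
Proof. intros [H1 H2]; split.
  - pose proof (isdR_opp _ _ _ H1) as H.
    eapply is_derive_ext; [|eapply is_derive_val; [|exact H]].
    + intros s; cbv beta; unfold Copp, Re, Im; reflexivity.
    + destruct a. reflexivity.
  - pose proof (isdR_opp _ _ _ H2) as H.
    eapply is_derive_ext; [|eapply is_derive_val; [|exact H]].
    + intros s; cbv beta; unfold Copp, Re, Im; reflexivity.
    + destruct a. reflexivity.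
Qed.

Lemma isd_const (c : C) x : isd (fun _ => c) x 0%C.
Proof. unfold isd; split; simpl; apply is_derive_c0. Qed.

Lemma isd_RtoC g x dg : is_derive g x dg -> isd (fun s => RtoC (g s)) x (RtoC dg).
Proof. intros H; unfold isd; split; simpl; [exact H| apply is_derive_c0]. Qed.

Lemma isd_mult f g x a b : isd f x a -> isd g x b -> isd (fun s => f s * g s)%C x (a * g x + f x * b)%C.
Proof. intros [H1 H2] [H3 H4]; split.
  - pose proof (isdR_minus _ _ _ _ _ (isdR_mult _ _ _ _ _ H1 H3) (isdR_mult _ _ _ _ _ H2 H4)) as H.
    eapply is_derive_ext; [|eapply is_derive_val; [|exact H]].
    + intros s. reflexivity.
    + destruct a, b, (f x), (g x). simpl. ring.
  - pose proof (isdR_plus _ _ _ _ _ (isdR_mult _ _ _ _ _ H1 H4) (isdR_mult _ _ _ _ _ H2 H3)) as H.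
    eapply is_derive_ext; [|eapply is_derive_val; [|exact H]].
    + intros s. reflexivity.
    + destruct a, b, (f x), (g x). simpl. ring.
Qed.

Lemma isd_unique f x a : isd f x a -> (Derive (fun s => Re (f s)) x, Derive (fun s => Im (f s)) x) = a.
Proof. intros [H1 H2]. destruct a as [a1 a2]; simpl in *. f_equal; apply is_derive_unique; assumption. Qed.

Lemma pd_of_isd i F t r th ph df : isd (slice i F t r th ph) (coord i t r th ph) df ->
  pd i F t r th ph = df /\ ex_pd i F t r th ph.
Proof. intros H. split.
  - unfold pd. apply isd_unique. exact H.
  - destruct H as [H1 H2]. split; eexists; eassumption.
Qed.

Lemma isd_of_ex i F t r th ph : ex_pd i F t r th ph ->
  isd (slice i F t r th ph) (coord i t r th ph) (pd i F t r th ph).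
Proof. intros [H1 H2]. unfold isd, pd. simpl. split; apply Derive_correct; assumption. Qed.

Definition sliceP (i:nat) (P : R->R->R->R->Prop) t r th ph : R -> Prop := fun s =>
  match i with O => P s r th ph | 1%nat => P t s th ph | 2%nat => P t r s ph | _ => P t r th s end.

Lemma Delta_cont (M k r : R) : continuous (Delta M k) r.
Proof. apply (ex_derive_continuous (V := R_NormedModule) (Delta M k) r). unfold Delta. auto_derive. auto. Qed.

Lemma loc_E (M k : R) i t r th ph : exterior M k t r th ph ->
  locally (coord i t r th ph) (sliceP i (exterior M k) t r th ph).
Proof.
  intros HE. pose proof HE as [Hr [HD Hth]].
  destruct i as [|[|[|i]]]; simpl; unfold sliceP.
  - apply filter_forall. intros s. exact HE.
  - assert (L1 := open_gt 0 r Hr).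
    assert (L2 := Delta_cont M k r _ (open_gt 0 _ HD)).
    eapply filter_imp; [|exact (filter_and _ _ L1 L2)].
    intros s [H1 H2]. split; [exact H1|split; [exact H2|exact Hth]].
  - assert (L1 := open_gt 0 th (proj1 Hth)).
    assert (L2 := open_lt PI th (proj2 Hth)).
    eapply filter_imp; [|exact (filter_and _ _ L1 L2)].
    intros s [H1 H2]. split; [exact Hr|split; [exact HD|split; assumption]].
  - apply filter_forall. intros s. exact HE.
Qed.

Definition eqE M k (F G : SWFun) : Prop :=
  forall t r th ph, exterior M k t r th ph -> F t r th ph = G t r th ph.

Lemma slice_loc (M k : R) i F G t r th ph : eqE M k F G -> exterior M k t r th ph ->
  locally (coord i t r th ph) (fun s => slice i F t r th ph s = slice i G t r th ph s).
Proof.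
  intros H HE. eapply filter_imp; [|exact (loc_E M k i t r th ph HE)].
  intros s Hs. destruct i as [|[|[|i]]]; simpl in *; apply H; exact Hs.
Qed.

Lemma pd_ext (M k : R) i F G : eqE M k F G -> eqE M k (pd i F) (pd i G).
Proof.
  intros H t r th ph HE. pose proof (slice_loc M k i F G t r th ph H HE) as L.
  unfold pd. f_equal; apply Derive_ext_loc; eapply filter_imp; try exact L;
  intros s Hs; simpl; rewrite Hs; reflexivity.
Qed.

Lemma isd_ext_loc (M k : R) i F G t r th ph df : eqE M k F G -> exterior M k t r th ph ->
  isd (slice i F t r th ph) (coord i t r th ph) df -> isd (slice i G t r th ph) (coord i t r th ph) df.
Proof.
  intros H HE [H1 H2]. pose proof (slice_loc M k i F G t r th ph H HE) as L.
  split; eapply is_derive_ext_loc; try eassumption; eapply filter_imp; try exact L;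
  intros s Hs; simpl; rewrite Hs; reflexivity.
Qed.

Lemma iter_app l1 l2 F : iter_pd (l1 ++ l2) F = iter_pd l1 (iter_pd l2 F).
Proof. unfold iter_pd. apply fold_right_app. Qed.

Lemma smooth_iter D F l : smooth_on D F -> smooth_on D (iter_pd l F).
Proof. intros H l' t r th ph HD. rewrite <- iter_app. apply H. exact HD. Qed.

Lemma comm2 (G : R -> R -> C) x y (P : R -> R -> Prop) :
  locally_2d P x y ->
  (forall u v, P u v ->
     ex_derive (fun z => Re (G z v)) u /\ ex_derive (fun z => Im (G z v)) u /\
     ex_derive (fun z => Re (G u z)) v /\ ex_derive (fun z => Im (G u z)) v /\
     ex_derive (fun z => Derive (fun t => Re (G z t)) v) u /\
     ex_derive (fun z => Derive (fun t => Im (G z t)) v) u /\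
     ex_derive (fun z => Derive (fun t => Re (G t z)) u) v /\
     ex_derive (fun z => Derive (fun t => Im (G t z)) u) v) ->
  continuity_2d_pt (fun u v => Derive (fun z => Derive (fun t => Re (G z t)) v) u) x y ->
  continuity_2d_pt (fun u v => Derive (fun z => Derive (fun t => Im (G z t)) v) u) x y ->
  continuity_2d_pt (fun u v => Derive (fun z => Derive (fun t => Re (G t z)) u) v) x y ->
  continuity_2d_pt (fun u v => Derive (fun z => Derive (fun t => Im (G t z)) u) v) x y ->
  (Derive (fun z => Derive (fun t => Re (G z t)) y) x, Derive (fun z => Derive (fun t => Im (G z t)) y) x) =
  (Derive (fun z => Derive (fun t => Re (G t z)) x) y, Derive (fun z => Derive (fun t => Im (G t z)) x) y).
Proof.
  intros HP Hd C1 C2 C3 C4. f_equal.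
  - apply (Schwarz (fun u v => Re (G u v))); try assumption.
    eapply locally_2d_impl; [|exact HP]. apply locally_2d_forall. intros u v Huv.
    destruct (Hd u v Huv) as (h1&h2&h3&h4&h5&h6&h7&h8). repeat split; assumption.
  - apply (Schwarz (fun u v => Im (G u v))); try assumption.
    eapply locally_2d_impl; [|exact HP]. apply locally_2d_forall. intros u v Huv.
    destruct (Hd u v Huv) as (h1&h2&h3&h4&h5&h6&h7&h8). repeat split; assumption.
Qed.

Lemma ext_ball (M k t r th ph : R) : exterior M k t r th ph ->
  exists d : posreal, forall t' r' th' ph', Rabs (r' - r) < d -> Rabs (th' - th) < d ->
    exterior M k t' r' th' ph'.
Proof.
  intros HE. pose proof HE as [Hr [HD Hth]].
  assert (L1 := open_gt 0 r Hr).
  assert (L2 := Delta_cont M k r _ (open_gt 0 _ HD)).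
  destruct (filter_and _ _ L1 L2) as [d1 H1].
  assert (L3 := open_gt 0 th (proj1 Hth)).
  assert (L4 := open_lt PI th (proj2 Hth)).
  destruct (filter_and _ _ L3 L4) as [d2 H2].
  assert (Hd : 0 < Rmin d1 d2) by (apply Rmin_pos; apply cond_pos).
  exists (mkposreal _ Hd). simpl. intros t' r' th' ph' Ha Hb.
  destruct (H1 r') as [a1 a2].
  { change (Rabs (r' - r) < d1). eapply Rlt_le_trans; [exact Ha| apply Rmin_l]. }
  destruct (H2 th') as [b1 b2].
  { change (Rabs (th' - th) < d2). eapply Rlt_le_trans; [exact Hb| apply Rmin_r]. }
  split; [exact a1| split; [exact a2| split; assumption]].
Qed.

Lemma emb_cont (e : R * R -> R * R * R * R) z :
  (forall (eps : posreal) z', ball z eps z' -> ball (e z) eps (e z')) ->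
  filterlim e (locally z) (locally (e z)).
Proof. intros H P [eps HP]. exists eps. intros z' Hz. apply HP. apply H. exact Hz. Qed.

Lemma Rabs0lt (x : R) (d : posreal) : Rabs (x - x) < d.
Proof. replace (x - x) with 0 by ring. rewrite Rabs_R0. apply cond_pos. Qed.

Ltac ext_loc2 HE :=
  let d := fresh "d" in let Hd := fresh "Hd" in
  destruct (ext_ball _ _ _ _ _ _ HE) as [d Hd]; exists d;
  intros u v Hu Hv; apply Hd; first [exact Hu | exact Hv | apply Rabs0lt].

Ltac cont_tac Hs HE l emb z0 which :=
  let C := fresh "C" in let Hb := fresh "Hb" in
  match which with
  | 0%nat => destruct (Hs l _ _ _ _ HE) as [_ [C _]]
  | _ => destruct (Hs l _ _ _ _ HE) as [_ [_ C]]
  end;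
  apply continuity_2d_pt_filterlim;
  assert (Hb : forall (eps : posreal) z', ball z0 eps z' -> ball (emb z0) eps (emb z'))
    by (let eps := fresh in let u := fresh in let v := fresh in let H1 := fresh in let H2 := fresh in
        intros eps [u v] [H1 H2]; simpl in *; repeat split; try assumption; apply ball_center);
  exact (filterlim_comp _ _ _ _ _ _ _ _ (emb_cont _ z0 Hb) C).

Ltac comm_case Hs HE G x y P emb i j :=
  refine (comm2 G x y P _ _ _ _ _ _);
  [ ext_loc2 HE
  | let u := fresh "u" in let v := fresh "v" in let Hp := fresh "Hp" in
    intros u v Hp;
    let A := fresh in let A0 := fresh in let A1 := fresh in
    destruct (Hs nil _ _ _ _ Hp) as [A _];
    destruct (Hs (i::nil) _ _ _ _ Hp) as [A0 _];
    destruct (Hs (j::nil) _ _ _ _ Hp) as [A1 _];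
    let a1 := fresh in let a2 := fresh in let a3 := fresh in let a4 := fresh in
    let a5 := fresh in let a6 := fresh in let a7 := fresh in let a8 := fresh in
    destruct (A i ltac:(lia)) as [a1 a2];
    destruct (A j ltac:(lia)) as [a3 a4];
    destruct (A1 i ltac:(lia)) as [a5 a6];
    destruct (A0 j ltac:(lia)) as [a7 a8];
    repeat split; assumption
  | cont_tac Hs HE (i::j::nil) emb (x,y) 0%nat
  | cont_tac Hs HE (i::j::nil) emb (x,y) 1%nat
  | cont_tac Hs HE (j::i::nil) emb (x,y) 0%nat
  | cont_tac Hs HE (j::i::nil) emb (x,y) 1%nat ].

Lemma comm_lt (M k : R) F t r th ph i j : smooth_on (exterior M k) F -> exterior M k t r th ph ->
  (i < j)%nat -> (i < 3)%nat ->
  pd i (pd j F) t r th ph = pd j (pd i F) t r th ph.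
Proof.
  intros Hs HE Hij Hi3.
  destruct i as [|[|[|i]]]; [| | |lia];
  (destruct j as [|[|[|j]]]; [lia| | | ]); try lia.
  - comm_case Hs HE (fun u v => F u v th ph) t r (fun u v => exterior M k u v th ph)
      (fun z : R * R => (fst z, snd z, th, ph)) 0%nat 1%nat.
  - comm_case Hs HE (fun u v => F u r v ph) t th (fun u v => exterior M k u r v ph)
      (fun z : R * R => (fst z, r, snd z, ph)) 0%nat 2%nat.
  - comm_case Hs HE (fun u v => F u r th v) t ph (fun u v => exterior M k u r th v)
      (fun z : R * R => (fst z, r, th, snd z)) 0%nat 3%nat.
  - comm_case Hs HE (fun u v => F t u v ph) r th (fun u v => exterior M k t u v ph)
      (fun z : R * R => (t, fst z, snd z, ph)) 1%nat 2%nat.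
  - comm_case Hs HE (fun u v => F t u th v) r ph (fun u v => exterior M k t u th v)
      (fun z : R * R => (t, fst z, th, snd z)) 1%nat 3%nat.
  - comm_case Hs HE (fun u v => F t r u v) th ph (fun u v => exterior M k t r u v)
      (fun z : R * R => (t, r, fst z, snd z)) 2%nat 3%nat.
Qed.

Lemma comm (M k : R) F t r th ph i j : smooth_on (exterior M k) F -> exterior M k t r th ph ->
  pd i (pd j F) t r th ph = pd j (pd i F) t r th ph.
Proof.
  intros Hs HE.
  destruct (Nat.lt_trichotomy i j) as [H|[H|H]].
  - destruct (Nat.lt_ge_cases i 3).
    + apply (comm_lt M k); assumption.
    + destruct i as [|[|[|i]]]; try lia. destruct j as [|[|[|j]]]; try lia. reflexivity.
  - subst; reflexivity.
  - destruct (Nat.lt_ge_cases j 3).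
    + symmetry; apply (comm_lt M k); assumption.
    + destruct i as [|[|[|i]]]; try lia. destruct j as [|[|[|j]]]; try lia. reflexivity.
Qed.

Lemma perm_iter (M k : R) F l l' : smooth_on (exterior M k) F -> Permutation l l' ->
  eqE M k (iter_pd l F) (iter_pd l' F).
Proof.
  intros Hs HP. induction HP.
  - intros t r th ph _; reflexivity.
  - simpl. apply (pd_ext M k). exact IHHP.
  - intros t r th ph HE. simpl. apply (comm M k); [|exact HE]. apply smooth_iter. exact Hs.
  - intros t r th ph HE. rewrite IHHP1 by exact HE. apply IHHP2. exact HE.
Qed.

Inductive co := CZ | CK (c : C) | CR | CIR | CIW | CS | CC | CIS
  | CAdd (a b : co) | CMul (a b : co) | COpp (a : co).

Fixpoint dco (M k : R) (c : co) (r th : R) : C :=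
  match c with
  | CZ => 0%C | CK c => c | CR => RtoC r | CIR => RtoC (/ r) | CIW => RtoC (/ wfun M k r)
  | CS => RtoC (sin th) | CC => RtoC (cos th) | CIS => RtoC (/ sin th)
  | CAdd a b => (dco M k a r th + dco M k b r th)%C
  | CMul a b => (dco M k a r th * dco M k b r th)%C
  | COpp a => (- dco M k a r th)%C
  end.

Definition cadd a b := match a with CZ => b | _ => match b with CZ => a | _ => CAdd a b end end.
Definition cmul a b := match a with CZ => CZ | _ => match b with CZ => CZ | _ => CMul a b end end.
Definition copp a := match a with CZ => CZ | _ => COpp a end.

Lemma cadd_ok M k a b r th : dco M k (cadd a b) r th = (dco M k a r th + dco M k b r th)%C.
Proof. destruct a, b; simpl; ring. Qed.
Lemma cmul_ok M k a b r th : dco M k (cmul a b) r th = (dco M k a r th * dco M k b r th)%C.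
Proof. destruct a, b; simpl; ring. Qed.
Lemma copp_ok M k a r th : dco M k (copp a) r th = (- dco M k a r th)%C.
Proof. destruct a; simpl; ring. Qed.

Definition dR (i : nat) (c : co) := match i with 1%nat => c | _ => CZ end.
Definition dT (i : nat) (c : co) := match i with 2%nat => c | _ => CZ end.

Definition wr_co (M : R) := CAdd (CMul (CK (RtoC (-2))) (CMul CIR (CMul CIR CIR)))
                              (CMul (CK (RtoC (6 * M))) (CMul CIR (CMul CIR (CMul CIR CIR)))).

Fixpoint dd (M : R) (i : nat) (c : co) : co :=
  match c with
  | CZ | CK _ => CZ
  | CR => dR i (CK 1%C)
  | CIR => dR i (COpp (CMul CIR CIR))
  | CIW => dR i (COpp (CMul (CMul CIW CIW) (wr_co M)))
  | CS => dT i CC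
  | CC => dT i (COpp CS)
  | CIS => dT i (COpp (CMul (CMul CIS CIS) CC))
  | CAdd a b => cadd (dd M i a) (dd M i b)
  | CMul a b => cadd (cmul (dd M i a) b) (cmul a (dd M i b))
  | COpp a => copp (dd M i a)
  end.

Definition cof M k c : SWFun := fun t r th ph => dco M k c r th.

Lemma slice_coord i F t r th ph : slice i F t r th ph (coord i t r th ph) = F t r th ph.
Proof. destruct i as [|[|[|i]]]; reflexivity. Qed.

Lemma wfun_deriv M k r : r <> 0 -> is_derive (wfun M k) r (-2 / r^3 + 6 * M / r^4).
Proof.
  intros Hr. unfold wfun, Delta. auto_derive.
  - repeat (apply Rmult_integral_contrapositive_currified; [exact Hr|]); lra.
  - field. exact Hr.
Qed.

Lemma is_derive_id1 x : is_derive (fun s : R => s) x 1.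
Proof. exact (is_derive_id x). Qed.

Lemma co_isd M k c i t r th ph : 0 < r -> wfun M k r <> 0 -> sin th <> 0 ->
  isd (slice i (cof M k c) t r th ph) (coord i t r th ph) (dco M k (dd M i c) r th).
Proof.
  intros Hr Hw Hs.
  induction c.
  - destruct i as [|[|[|i]]]; apply isd_const.
  - destruct i as [|[|[|i]]]; apply isd_const.
  - destruct i as [|[|[|i]]]; try apply isd_const.
    simpl. apply isd_RtoC. apply is_derive_id1.
  - destruct i as [|[|[|i]]]; try apply isd_const.
    simpl. eapply isd_val; [|apply isd_RtoC; apply (is_derive_inv (fun s => s)); [apply is_derive_id1| lra]].
    rewrite <- RtoC_mult, <- RtoC_opp. f_equal. field. lra.
  - destruct i as [|[|[|i]]]; try apply isd_const.
    simpl. eapply isd_val; [|apply isd_RtoC; apply (is_derive_inv (wfun M k)); [apply wfun_deriv; lra| exact Hw]].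
    unfold wr_co; simpl. rewrite <- !RtoC_mult, <- !RtoC_plus, <- !RtoC_mult, <- RtoC_opp. f_equal. field. lra.
  - destruct i as [|[|[|i]]]; try apply isd_const.
    simpl. apply isd_RtoC. apply is_derive_Reals. apply derivable_pt_lim_sin.
  - destruct i as [|[|[|i]]]; try apply isd_const.
    simpl. eapply isd_val; [|apply isd_RtoC; apply is_derive_Reals; apply derivable_pt_lim_cos].
    rewrite <- RtoC_opp. reflexivity.
  - destruct i as [|[|[|i]]]; try apply isd_const.
    simpl. eapply isd_val; [|apply isd_RtoC; apply (is_derive_inv sin); [apply is_derive_Reals; apply derivable_pt_lim_sin| exact Hs]].
    rewrite <- !RtoC_mult, <- RtoC_opp. f_equal. field. exact Hs.
  - simpl. rewrite cadd_ok.
    eapply isd_ext; [|apply isd_plus; [exact IHc1|exact IHc2]].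
    intros s; destruct i as [|[|[|i]]]; reflexivity.
  - simpl. rewrite cadd_ok, !cmul_ok.
    eapply isd_ext; [|eapply isd_val; [|apply isd_mult; [exact IHc1|exact IHc2]]].
    + intros s; destruct i as [|[|[|i]]]; reflexivity.
    + rewrite !slice_coord. reflexivity.
  - simpl. rewrite copp_ok.
    eapply isd_ext; [|apply isd_opp; exact IHc].
    intros s; destruct i as [|[|[|i]]]; reflexivity.
Qed.

Inductive tm := J (l : list nat) | Co (c : co) | TAdd (a b : tm) | TMul (a b : tm) | TOpp (a : tm).

Fixpoint den (M k : R) (al : SWFun) (e : tm) : SWFun :=
  match e with
  | J l => iter_pd l al
  | Co c => cof M k c
  | TAdd a b => fun t r th ph => (den M k al a t r th ph + den M k al b t r th ph)%C
  | TMul a b => fun t r th ph => (den M k al a t r th ph * den M k al b t r th ph)%C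
  | TOpp a => fun t r th ph => (- den M k al a t r th ph)%C
  end.

Definition tadd a b := match a with Co CZ => b | _ => match b with Co CZ => a | _ => TAdd a b end end.
Definition tmul a b := match a with Co CZ => Co CZ | _ => match b with Co CZ => Co CZ | _ => TMul a b end end.
Definition topp a := match a with Co CZ => Co CZ | _ => TOpp a end.

Lemma tadd_ok M k al a b t r th ph : den M k al (tadd a b) t r th ph = (den M k al a t r th ph + den M k al b t r th ph)%C.
Proof. destruct a as [| [] | | |], b as [| [] | | |]; simpl; unfold cof; simpl; ring. Qed.
Lemma tmul_ok M k al a b t r th ph : den M k al (tmul a b) t r th ph = (den M k al a t r th ph * den M k al b t r th ph)%C.
Proof. destruct a as [| [] | | |], b as [| [] | | |]; simpl; unfold cof; simpl; ring. Qed.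
Lemma topp_ok M k al a t r th ph : den M k al (topp a) t r th ph = (- den M k al a t r th ph)%C.
Proof. destruct a as [| [] | | |]; simpl; unfold cof; simpl; ring. Qed.

Fixpoint ins (i : nat) (l : list nat) : list nat :=
  match l with
  | nil => i :: nil
  | j :: l' => if Nat.leb i j then i :: l else j :: ins i l'
  end.

Lemma ins_perm i l : Permutation (i :: l) (ins i l).
Proof.
  induction l as [|j l IH]; simpl; [constructor; constructor|].
  destruct (Nat.leb i j); [reflexivity|].
  eapply perm_trans; [apply perm_swap|]. constructor. exact IH.
Qed.

Fixpoint D (M : R) (i : nat) (e : tm) : tm :=
  match e with
  | J l => J (ins i l)
  | Co c => Co (dd M i c)
  | TAdd a b => tadd (D M i a) (D M i b)
  | TMul a b => tadd (tmul (D M i a) b) (tmul a (D M i b))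
  | TOpp a => topp (D M i a)
  end.

Lemma ext_nz M k t r th ph : exterior M k t r th ph -> 0 < r /\ wfun M k r <> 0 /\ sin th <> 0.
Proof.
  intros [Hr [HD Hth]]. split; [exact Hr|split].
  - unfold wfun. apply Rgt_not_eq. apply Rdiv_lt_0_compat; [exact HD|apply pow_lt; exact Hr].
  - apply Rgt_not_eq. apply sin_gt_0; apply Hth.
Qed.

Lemma den_isd M k al e i t r th ph : smooth_on (exterior M k) al -> (i < 4)%nat ->
  exterior M k t r th ph ->
  isd (slice i (den M k al e) t r th ph) (coord i t r th ph) (den M k al (D M i e) t r th ph).
Proof.
  intros Hs Hi HE. destruct (ext_nz M k t r th ph HE) as (Hr & Hw & Hsn).
  induction e.
  - simpl. eapply isd_val; [|apply isd_of_ex].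
    + apply (perm_iter M k al (i :: l) (ins i l) Hs (ins_perm i l)). exact HE.
    + destruct (smooth_iter _ _ l Hs nil t r th ph HE) as [A _]. apply A. exact Hi.
  - simpl. apply co_isd; assumption.
  - simpl. rewrite tadd_ok.
    eapply isd_ext; [|apply isd_plus; [exact IHe1|exact IHe2]].
    intros s; destruct i as [|[|[|i]]]; reflexivity.
  - simpl. rewrite tadd_ok, !tmul_ok.
    eapply isd_ext; [|eapply isd_val; [|apply isd_mult; [exact IHe1|exact IHe2]]].
    + intros s; destruct i as [|[|[|i]]]; reflexivity.
    + rewrite !slice_coord. reflexivity.
  - simpl. rewrite topp_ok.
    eapply isd_ext; [|apply isd_opp; exact IHe].
    intros s; destruct i as [|[|[|i]]]; reflexivity.
Qed.

Lemma pd_den M k al e i t r th ph : smooth_on (exterior M k) al -> (i < 4)%nat ->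
  exterior M k t r th ph ->
  pd i (den M k al e) t r th ph = den M k al (D M i e) t r th ph.
Proof. intros. apply pd_of_isd. apply den_isd; assumption. Qed.

Definition rep M k al (F : SWFun) (e : tm) := eqE M k F (den M k al e).

Lemma rep_pd M k al F e i : smooth_on (exterior M k) al -> (i < 4)%nat ->
  rep M k al F e -> rep M k al (pd i F) (D M i e).
Proof.
  intros Hs Hi H t r th ph HE. rewrite (pd_ext M k i F (den M k al e) H t r th ph HE).
  apply pd_den; assumption.
Qed.

Definition cM (M : R) := CK (RtoC M).
Definition cd (M k : R) := CAdd (CK 1%C) (CAdd (CMul (CMul (CK (RtoC k)) (CK (RtoC k))) (CMul CR CR))
                                  (CMul (CMul (CK (RtoC (-2))) (cM M)) CIR)).
Definition cw (M k : R) := CAdd (CMul CIR CIR) (CAdd (CMul (CK (RtoC k)) (CK (RtoC k)))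
                                  (CMul (CMul (CK (RtoC (-2))) (cM M)) (CMul CIR (CMul CIR CIR)))).
(* g = w'/w = -2/r + 6M/r^2 *)
Definition cg (M : R) := CAdd (CMul (CK (RtoC (-2))) CIR) (CMul (CMul (CK (RtoC 6)) (cM M)) (CMul CIR CIR)).
Definition c6Mr (M : R) := CMul (CMul (CK (RtoC 6)) (cM M)) CIR.

Lemma cd_ok M k r th : r <> 0 -> dco M k (cd M k) r th = RtoC (drsdr_inv M k r).
Proof. intros Hr. unfold cd, cM, drsdr_inv, Delta; simpl.
  rewrite <- !RtoC_mult, <- !RtoC_plus. f_equal. field. exact Hr. Qed.

Lemma cw_ok M k r th : r <> 0 -> dco M k (cw M k) r th = RtoC (wfun M k r).
Proof. intros Hr. unfold cw, cM, wfun, Delta; simpl.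
  rewrite <- !RtoC_mult, <- !RtoC_plus. f_equal. field. exact Hr. Qed.

Lemma wprime_ok M k r : 0 < r -> wfun M k r <> 0 ->
  2 * (wprime M k r / wfun M k r) = 2 * (-2 / r + 6 * M / r^2).
Proof.
  intros Hr Hw. unfold wprime. rewrite (is_derive_unique _ _ _ (wfun_deriv M k r ltac:(lra))).
  unfold drsdr_inv. unfold wfun in *. unfold Delta in *.
  field. split; [lra|]. intros H; apply Hw. rewrite H. unfold Rdiv. ring.
Qed.

Definition LopT M k e := tadd (D M 0 e) (tmul (Co (cd M k)) (D M 1 e)).
Definition LbopT M k e := tadd (D M 0 e) (topp (tmul (Co (cd M k)) (D M 1 e))).
Definition wLopT M k e := tmul (Co CIW) (LopT M k e).
Definition wLbopT M k e := tmul (Co CIW) (LbopT M k e).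
Definition LangT M (sgn : R) e :=
  topp (tadd (tadd (tadd (tadd
    (tmul (Co CIS) (D M 2 (tmul (Co CS) (D M 2 e))))
    (tmul (Co (CMul CIS CIS)) (D M 3 (D M 3 e))))
    (tmul (Co (CMul (CMul (CK (RtoC sgn)) (CMul (CK (RtoC 4)) (CK Ci))) (CMul CC (CMul CIS CIS)))) (D M 3 e)))
    (topp (tmul (Co (CMul (CK (RtoC 4)) (CMul (CMul CC CIS) (CMul CC CIS)))) e)))
    (topp (tmul (Co (CK (RtoC 4))) e))).

Section Reps.
Variables (M k : R) (al : SWFun).
Hypothesis Hs : smooth_on (exterior M k) al.

Lemma rep_Lop F e : rep M k al F e -> rep M k al (Lop M k F) (LopT M k e).
Proof.
  intros H t r th ph HE. destruct (ext_nz M k t r th ph HE) as (Hr & Hw & Hsn).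
  unfold Lop. rewrite (rep_pd M k al F e 0 Hs ltac:(lia) H t r th ph HE), (rep_pd M k al F e 1 Hs ltac:(lia) H t r th ph HE).
  unfold LopT. rewrite tadd_ok, tmul_ok. cbn [den]. unfold cof. rewrite cd_ok by lra. reflexivity.
Qed.

Lemma rep_Lbop F e : rep M k al F e -> rep M k al (Lbop M k F) (LbopT M k e).
Proof.
  intros H t r th ph HE. destruct (ext_nz M k t r th ph HE) as (Hr & Hw & Hsn).
  unfold Lbop. rewrite (rep_pd M k al F e 0 Hs ltac:(lia) H t r th ph HE), (rep_pd M k al F e 1 Hs ltac:(lia) H t r th ph HE).
  unfold LbopT. rewrite tadd_ok, topp_ok, tmul_ok. cbn [den]. unfold cof. rewrite cd_ok by lra. ring.
Qed.

Lemma rep_wLop F e : rep M k al F e -> rep M k al (wLop M k F) (wLopT M k e).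
Proof.
  intros H t r th ph HE. unfold wLop, wLopT. rewrite tmul_ok. rewrite (rep_Lop F e H t r th ph HE). reflexivity.
Qed.

Lemma rep_wLbop F e : rep M k al F e -> rep M k al (wLbop M k F) (wLbopT M k e).
Proof.
  intros H t r th ph HE. unfold wLbop, wLbopT. rewrite tmul_ok. rewrite (rep_Lbop F e H t r th ph HE). reflexivity.
Qed.

Lemma rep_Lang sgn F e : rep M k al F e -> rep M k al (Lang sgn F) (LangT M sgn e).
Proof.
  intros H t r th ph HE. destruct (ext_nz M k t r th ph HE) as (Hr & Hw & Hsn).
  assert (H2 : rep M k al (fun t' r' th' ph' => (RtoC (sin th') * pd 2 F t' r' th' ph')%C) (tmul (Co CS) (D M 2 e))).
  { intros t' r' th' ph' HE'. rewrite tmul_ok. rewrite (rep_pd M k al F e 2 Hs ltac:(lia) H t' r' th' ph' HE'). reflexivity. }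
  unfold Lang. rewrite (rep_pd M k al _ _ 2 Hs ltac:(lia) H2 t r th ph HE).
  rewrite (rep_pd M k al _ _ 3 Hs ltac:(lia) (rep_pd M k al F e 3 Hs ltac:(lia) H) t r th ph HE).
  rewrite (rep_pd M k al F e 3 Hs ltac:(lia) H t r th ph HE).
  rewrite (H t r th ph HE).
  unfold LangT. rewrite ?tadd_ok, ?topp_ok, ?tmul_ok, ?tadd_ok, ?topp_ok, ?tmul_ok.
  simpl. unfold cof; simpl.
  unfold Rdiv. rewrite ?Rmult_1_r, ?Rinv_mult, ?RtoC_mult. ring.
Qed.
End Reps.

Definition TeukPT M k e :=
  tadd (tadd (topp (LopT M k (LbopT M k e))) (tmul (Co (CMul (CK (RtoC 2)) (cg M))) (LbopT M k e)))
       (topp (tmul (Co (cw M k)) (tadd (tadd (LangT M 1 e) (tmul (Co (CK (RtoC (-2)))) e)) (tmul (Co (c6Mr M)) e)))).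
Definition TeukMT M k e :=
  tadd (tadd (topp (LopT M k (LbopT M k e))) (topp (tmul (Co (CMul (CK (RtoC 2)) (cg M))) (LopT M k e))))
       (topp (tmul (Co (cw M k)) (tadd (tadd (LangT M (-1) e) (tmul (Co (CK (RtoC (-2)))) e)) (tmul (Co (c6Mr M)) e)))).

Definition Zr M k al e := forall t r th ph, exterior M k t r th ph -> den M k al e t r th ph = 0%C.

Lemma coef_g M k r th : 0 < r -> wfun M k r <> 0 ->
  RtoC (2 * (wprime M k r / wfun M k r)) = dco M k (CMul (CK (RtoC 2)) (cg M)) r th.
Proof. intros Hr Hw. rewrite wprime_ok by assumption. unfold cg, cM; cbn [dco].
  rewrite <- !RtoC_mult, <- !RtoC_plus, <- !RtoC_mult. f_equal. all: field; lra. Qed.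
Lemma coef_6M M k r th : 0 < r -> RtoC (6 * M / r) = dco M k (c6Mr M) r th.
Proof. intros Hr. unfold c6Mr, cM; cbn [dco]. rewrite <- !RtoC_mult. f_equal. all: unfold Rdiv; ring. Qed.

Ltac coef_tac M k r th Hr Hw :=
  rewrite (coef_g M k r th Hr Hw), (coef_6M M k r th Hr), (cw_ok M k r th) by lra;
  repeat match goal with |- context [den ?M ?k ?al ?e ?t ?r ?th ?ph] => generalize (den M k al e t r th ph); intro end;
  cbn [dco]; ring.

Section Reps2.
Variables (M k : R) (al : SWFun).
Hypothesis Hs : smooth_on (exterior M k) al.

Lemma rep_Teuk_plus F e : rep M k al F e -> rep M k al (Teuk_plus M k F) (TeukPT M k e).
Proof.
  intros H t r th ph HE. destruct (ext_nz M k t r th ph HE) as (Hr & Hw & Hsn).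
  unfold Teuk_plus.
  rewrite (rep_Lop M k al Hs _ _ (rep_Lbop M k al Hs F e H) t r th ph HE).
  rewrite (rep_Lbop M k al Hs F e H t r th ph HE).
  rewrite (rep_Lang M k al Hs 1 F e H t r th ph HE).
  rewrite (H t r th ph HE).
  unfold TeukPT. rewrite ?tadd_ok, ?topp_ok, ?tmul_ok, ?tadd_ok, ?topp_ok, ?tmul_ok.
  cbn [den]. unfold cof. coef_tac M k r th Hr Hw.
Qed.

Lemma rep_Teuk_minus F e : rep M k al F e -> rep M k al (Teuk_minus M k F) (TeukMT M k e).
Proof.
  intros H t r th ph HE. destruct (ext_nz M k t r th ph HE) as (Hr & Hw & Hsn).
  unfold Teuk_minus.
  rewrite (rep_Lop M k al Hs _ _ (rep_Lbop M k al Hs F e H) t r th ph HE).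
  rewrite (rep_Lop M k al Hs F e H t r th ph HE).
  rewrite (rep_Lang M k al Hs (-1) F e H t r th ph HE).
  rewrite (H t r th ph HE).
  unfold TeukMT. rewrite ?tadd_ok, ?topp_ok, ?tmul_ok, ?tadd_ok, ?topp_ok, ?tmul_ok.
  cbn [den]. unfold cof. coef_tac M k r th Hr Hw.
Qed.

Lemma Z_D e i : (i < 4)%nat -> Zr M k al e -> Zr M k al (D M i e).
Proof.
  intros Hi HZ t r th ph HE. rewrite <- (pd_den M k al e i t r th ph Hs Hi HE).
  rewrite (pd_ext M k i (den M k al e) (fun _ _ _ _ => 0%C) HZ t r th ph HE).
  unfold pd. destruct i as [|[|[|i]]]; simpl; rewrite Derive_const; reflexivity.
Qed.

Lemma Z_tadd a b : Zr M k al a -> Zr M k al b -> Zr M k al (tadd a b).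
Proof. intros Ha Hb t r th ph HE. rewrite tadd_ok, Ha, Hb by exact HE. ring. Qed.
Lemma Z_tmul a b : Zr M k al b -> Zr M k al (tmul a b).
Proof. intros Hb t r th ph HE. rewrite tmul_ok, Hb by exact HE. ring. Qed.
Lemma Z_topp a : Zr M k al a -> Zr M k al (topp a).
Proof. intros Ha t r th ph HE. rewrite topp_ok, Ha by exact HE. ring. Qed.

Lemma Z_LopT e : Zr M k al e -> Zr M k al (LopT M k e).
Proof. intros H. unfold LopT. apply Z_tadd; [|apply Z_tmul]; apply Z_D; auto. Qed.
Lemma Z_LbopT e : Zr M k al e -> Zr M k al (LbopT M k e).
Proof. intros H. unfold LbopT. apply Z_tadd; [|apply Z_topp; apply Z_tmul]; apply Z_D; auto. Qed.
Lemma Z_LangT s e : Zr M k al e -> Zr M k al (LangT M s e).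
Proof. intros H. unfold LangT.
  repeat first [apply Z_tadd | apply Z_topp | apply Z_tmul | apply Z_D; [lia|] | exact H]. Qed.
End Reps2.

Lemma w2_ok M k r th : r <> 0 -> RtoC (wfun M k r ^ 2) = dco M k (CMul (cw M k) (cw M k)) r th.
Proof. intros Hr. cbn [dco]. rewrite (cw_ok M k r th Hr). simpl. rewrite Rmult_1_r, RtoC_mult. reflexivity. Qed.

Definition wpolyC (M k r : R) : C :=
  ((/ RtoC r) * (/ RtoC r) + (RtoC k * RtoC k + RtoC (-2) * RtoC M * ((/ RtoC r) * ((/ RtoC r) * (/ RtoC r)))))%C.

Lemma wpoly_ok M k r : r <> 0 -> wpolyC M k r = RtoC (wfun M k r).
Proof. intros Hr. unfold wpolyC.
  assert (Hp : wfun M k r = /r * /r + (k*k + -2*M*(/r*(/r*/r)))) by (unfold wfun, Delta; field; auto).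
  rewrite Hp. rewrite <- RtoC_inv by exact Hr. rewrite <- !RtoC_mult, <- !RtoC_plus. reflexivity.
Qed.

Lemma invw_ok M k r : r <> 0 -> wfun M k r <> 0 -> RtoC (/ wfun M k r) = (/ wpolyC M k r)%C.
Proof. intros Hr Hw. rewrite wpoly_ok by exact Hr. apply RtoC_inv. exact Hw. Qed.

Ltac expand := cbv beta iota delta [den D tadd tmul topp ins dd cadd cmul copp dR dT LopT LbopT wLopT wLbopT LangT TeukPT TeukMT cd cw cg c6Mr cM wr_co Nat.leb cof dco].

Lemma plus_case (M k : R) (a : SWFun) : smooth_on (exterior M k) a ->
  (forall t r th ph, exterior M k t r th ph -> Teuk_plus M k a t r th ph = RtoC 0) ->
  forall t r th ph, exterior M k t r th ph ->
       (Lang 1 (fun t' r' th' ph' => (Lang 1 a t' r' th' ph' - RtoC 2 * a t' r' th' ph')%C)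
          t r th ph
        - RtoC (12 * M) * pd 0 a t r th ph)%C
       = (RtoC (wfun M k r ^ 2) *
          wLop M k (wLop M k (wLbop M k (wLbop M k a))) t r th ph)%C.
Proof.
  intros Hs HT t r th ph HE.
  destruct (ext_nz M k t r th ph HE) as (Hr & Hw & Hsn).
  assert (R0 : rep M k a a (J nil)) by (intros ? ? ? ? ?; reflexivity).
  assert (ZT : Zr M k a (TeukPT M k (J nil))).
  { intros t' r' th' ph' HE'. rewrite <- (rep_Teuk_plus M k a Hs a (J nil) R0 t' r' th' ph' HE'). apply HT. exact HE'. }
  assert (Rin : rep M k a (fun t' r' th' ph' => (Lang 1 a t' r' th' ph' - RtoC 2 * a t' r' th' ph')%C)
                  (tadd (LangT M 1 (J nil)) (tmul (Co (CK (RtoC (-2)))) (J nil)))).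
  { intros t' r' th' ph' HE'. rewrite tadd_ok, tmul_ok, (rep_Lang M k a Hs 1 a (J nil) R0 t' r' th' ph' HE').
    cbn [den iter_pd fold_right]. unfold cof. cbn [dco].
    repeat match goal with |- context [den ?M ?k ?al ?e ?t ?r ?th ?ph] => generalize (den M k al e t r th ph); intro end.
    ring. }
  rewrite (rep_Lang M k a Hs 1 _ _ Rin t r th ph HE).
  rewrite (rep_pd M k a a (J nil) 0 Hs ltac:(lia) R0 t r th ph HE).
  rewrite (rep_wLop M k a Hs _ _ (rep_wLop M k a Hs _ _ (rep_wLbop M k a Hs _ _ (rep_wLbop M k a Hs _ _ R0))) t r th ph HE).
  rewrite (w2_ok M k r th) by lra.
  set (eT := TeukPT M k (J nil)) in ZT.
  set (y := topp (tmul (Co CIW) (tadd (LbopT M k eT) (tmul (Co (cg M)) eT)))).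
  set (eC := tmul (Co CIW) (tadd (tadd (LangT M 1 eT) (topp (tmul (Co (c6Mr M)) eT)))
                                 (tadd (LopT M k y) (topp (tmul (Co (CMul (CK (RtoC 2)) (cg M))) y))))).
  assert (ZY : Zr M k a y).
  { exact (Z_topp M k a _ (Z_tmul M k a _ _ (Z_tadd M k a _ _ (Z_LbopT M k a Hs _ ZT) (Z_tmul M k a _ _ ZT)))). }
  assert (ZC : Zr M k a eC).
  { exact (Z_tmul M k a _ _ (Z_tadd M k a _ _
       (Z_tadd M k a _ _ (Z_LangT M k a Hs _ _ ZT) (Z_topp M k a _ (Z_tmul M k a _ _ ZT)))
       (Z_tadd M k a _ _ (Z_LopT M k a Hs _ ZY) (Z_topp M k a _ (Z_tmul M k a _ _ ZY))))). }
  specialize (ZC t r th ph HE).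
  transitivity (den M k a (LangT M 1 (tadd (LangT M 1 (J nil)) (tmul (Co (CK (RtoC (-2)))) (J nil)))) t r th ph
                - RtoC (12 * M) * den M k a (D M 0 (J nil)) t r th ph + den M k a eC t r th ph)%C.
  { rewrite ZC.
    repeat match goal with |- context [den ?M ?k ?al ?e ?t ?r ?th ?ph] => generalize (den M k al e t r th ph); intro end.
    generalize (dco M k (CMul (cw M k) (cw M k)) r th). intros. ring. }
  clear ZC. unfold eC, y, eT.
  expand.
  rewrite (invw_ok M k r) by lra.
  rewrite !(RtoC_inv r) by lra.
  rewrite !(RtoC_inv (sin th)) by exact Hsn.
  repeat match goal with |- context [iter_pd ?l a t r th ph] => generalize (iter_pd l a t r th ph); intro end.
  assert (Hr' : RtoC r <> 0%C) by (intros Hc; apply RtoC_inj in Hc; lra).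
  assert (Hs' : RtoC (sin th) <> 0%C) by (intros Hc; apply RtoC_inj in Hc; apply Hsn; exact Hc).
  assert (Hw' : wpolyC M k r <> 0%C) by (rewrite wpoly_ok by lra; intros Hc; apply RtoC_inj in Hc; apply Hw; exact Hc).
  unfold wpolyC in *.
  rewrite (RtoC_mult 12 M). rewrite ?(RtoC_mult 6 M).
  field.
  split; [exact Hr'|split; [|exact Hs']].
  intros Hc. cbv beta in Hc. rewrite <- !RtoC_mult, <- !RtoC_plus in Hc. apply RtoC_inj in Hc.
  destruct HE as [_ [HD _]]. unfold Delta in HD.
  assert (Hx : r ^ 2 + k ^ 2 * r ^ 4 - 2 * M * r = r * (r + (k * k * (r * (r * r)) + -2 * M))) by ring.
  rewrite Hx, Hc in HD. lra.
Qed.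

Lemma minus_case (M k : R) (a : SWFun) : smooth_on (exterior M k) a ->
  (forall t r th ph, exterior M k t r th ph -> Teuk_minus M k a t r th ph = RtoC 0) ->
  forall t r th ph, exterior M k t r th ph ->
       (Lang (-1) (fun t' r' th' ph' => (Lang (-1) a t' r' th' ph' - RtoC 2 * a t' r' th' ph')%C)
          t r th ph
        + RtoC (12 * M) * pd 0 a t r th ph)%C
       = (RtoC (wfun M k r ^ 2) *
          wLbop M k (wLbop M k (wLop M k (wLop M k a))) t r th ph)%C.
Proof.
  intros Hs HT t r th ph HE.
  destruct (ext_nz M k t r th ph HE) as (Hr & Hw & Hsn).
  assert (R0 : rep M k a a (J nil)) by (intros ? ? ? ? ?; reflexivity).
  assert (ZT : Zr M k a (TeukMT M k (J nil))).
  { intros t' r' th' ph' HE'. rewrite <- (rep_Teuk_minus M k a Hs a (J nil) R0 t' r' th' ph' HE'). apply HT. exact HE'. }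
  assert (Rin : rep M k a (fun t' r' th' ph' => (Lang (-1) a t' r' th' ph' - RtoC 2 * a t' r' th' ph')%C)
                  (tadd (LangT M (-1) (J nil)) (tmul (Co (CK (RtoC (-2)))) (J nil)))).
  { intros t' r' th' ph' HE'. rewrite tadd_ok, tmul_ok, (rep_Lang M k a Hs (-1) a (J nil) R0 t' r' th' ph' HE').
    cbn [den iter_pd fold_right]. unfold cof. cbn [dco].
    repeat match goal with |- context [den ?M ?k ?al ?e ?t ?r ?th ?ph] => generalize (den M k al e t r th ph); intro end.
    ring. }
  rewrite (rep_Lang M k a Hs (-1) _ _ Rin t r th ph HE).
  rewrite (rep_pd M k a a (J nil) 0 Hs ltac:(lia) R0 t r th ph HE).
  rewrite (rep_wLbop M k a Hs _ _ (rep_wLbop M k a Hs _ _ (rep_wLop M k a Hs _ _ (rep_wLop M k a Hs _ _ R0))) t r th ph HE).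
  rewrite (w2_ok M k r th) by lra.
  set (eT := TeukMT M k (J nil)) in ZT.
  set (y := topp (tmul (Co CIW) (tadd (topp (LopT M k eT)) (tmul (Co (cg M)) eT)))).
  set (eC := tmul (Co CIW) (tadd (tadd (LangT M (-1) eT) (topp (tmul (Co (c6Mr M)) eT)))
                                 (tadd (topp (LbopT M k y)) (topp (tmul (Co (CMul (CK (RtoC 2)) (cg M))) y))))).
  assert (ZY : Zr M k a y).
  { exact (Z_topp M k a _ (Z_tmul M k a _ _ (Z_tadd M k a _ _ (Z_topp M k a _ (Z_LopT M k a Hs _ ZT)) (Z_tmul M k a _ _ ZT)))). }
  assert (ZC : Zr M k a eC).
  { exact (Z_tmul M k a _ _ (Z_tadd M k a _ _
       (Z_tadd M k a _ _ (Z_LangT M k a Hs _ _ ZT) (Z_topp M k a _ (Z_tmul M k a _ _ ZT)))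
       (Z_tadd M k a _ _ (Z_topp M k a _ (Z_LbopT M k a Hs _ ZY)) (Z_topp M k a _ (Z_tmul M k a _ _ ZY))))). }
  specialize (ZC t r th ph HE).
  transitivity (den M k a (LangT M (-1) (tadd (LangT M (-1) (J nil)) (tmul (Co (CK (RtoC (-2)))) (J nil)))) t r th ph
                + RtoC (12 * M) * den M k a (D M 0 (J nil)) t r th ph + den M k a eC t r th ph)%C.
  { rewrite ZC.
    repeat match goal with |- context [den ?M ?k ?al ?e ?t ?r ?th ?ph] => generalize (den M k al e t r th ph); intro end.
    generalize (dco M k (CMul (cw M k) (cw M k)) r th). intros. ring. }
  clear ZC. unfold eC, y, eT.
  expand.
  rewrite (invw_ok M k r) by lra.
  rewrite !(RtoC_inv r) by lra.
  rewrite !(RtoC_inv (sin th)) by exact Hsn.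
  repeat match goal with |- context [iter_pd ?l a t r th ph] => generalize (iter_pd l a t r th ph); intro end.
  assert (Hr' : RtoC r <> 0%C) by (intros Hc; apply RtoC_inj in Hc; lra).
  assert (Hs' : RtoC (sin th) <> 0%C) by (intros Hc; apply RtoC_inj in Hc; apply Hsn; exact Hc).
  assert (Hw' : wpolyC M k r <> 0%C) by (rewrite wpoly_ok by lra; intros Hc; apply RtoC_inj in Hc; apply Hw; exact Hc).
  unfold wpolyC in *.
  rewrite (RtoC_mult 12 M). rewrite ?(RtoC_mult 6 M).
  field.
  split; [exact Hr'|split; [|exact Hs']].
  intros Hc. cbv beta in Hc. rewrite <- !RtoC_mult, <- !RtoC_plus in Hc. apply RtoC_inj in Hc.
  destruct HE as [_ [HD _]]. unfold Delta in HD.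
  assert (Hx : r ^ 2 + k ^ 2 * r ^ 4 - 2 * M * r = r * (r + (k * k * (r * (r * r)) + -2 * M))) by ring.
  rewrite Hx, Hc in HD. lra.
Qed.

Theorem lemma2p9 (M k : R) (HM : 0 < M) (Hk : 0 < k) :
  (forall a : SWFun,
     smooth_on (exterior M k) a -> phi_periodic a ->
     (forall t r th ph, exterior M k t r th ph -> Teuk_plus M k a t r th ph = RtoC 0) ->
     forall t r th ph, exterior M k t r th ph ->
       (Lang 1 (fun t' r' th' ph' => (Lang 1 a t' r' th' ph' - RtoC 2 * a t' r' th' ph')%C)
          t r th ph
        - RtoC (12 * M) * pd 0 a t r th ph)%C
       = (RtoC (wfun M k r ^ 2) *
          wLop M k (wLop M k (wLbop M k (wLbop M k a))) t r th ph)%C)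
  /\
  (forall a : SWFun,
     smooth_on (exterior M k) a -> phi_periodic a ->
     (forall t r th ph, exterior M k t r th ph -> Teuk_minus M k a t r th ph = RtoC 0) ->
     forall t r th ph, exterior M k t r th ph ->
       (Lang (-1) (fun t' r' th' ph' => (Lang (-1) a t' r' th' ph' - RtoC 2 * a t' r' th' ph')%C)
          t r th ph
        + RtoC (12 * M) * pd 0 a t r th ph)%C
       = (RtoC (wfun M k r ^ 2) *
          wLbop M k (wLbop M k (wLop M k (wLop M k a))) t r th ph)%C).
Proof.
  split.
  - intros a Hs _ HT. exact (plus_case M k a Hs HT).
  - intros a Hs _ HT. exact (minus_case M k a Hs HT).
Qed.
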